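(* Let $\mathfrak{R}$ be an alternative ring with a nontrivial idempotent $e_1$, with Peirce decomposition $\mathfrak{R}=\mathfrak{R}_{11}\oplus\mathfrak{R}_{12}\oplus\mathfrak{R}_{21}\oplus\mathfrak{R}_{22}$ relative to $e_1$, and let $\mathcal{D}\colon\mathfrak{R}\to\mathfrak{R}$ be a multiplicative Lie-type derivation of $\mathfrak{R}$. Suppose that $\mathfrak{R}$ satisfies: (i) if $a_{11}\in\mathfrak{R}_{11}$, $a_{22}\in\mathfrak{R}_{22}$ and $[a_{11}+a_{22},x]=0$ for all $x\in\mathfrak{R}_{12}$, then $a_{11}+a_{22}\in\mathcal{Z}(\mathfrak{R})$; (ii) if $a_{11}\in\mathfrak{R}_{11}$, $a_{22}\in\mathfrak{R}_{22}$ and $[a_{11}+a_{22},x]=0$ for all $x\in\mathfrak{R}_{21}$, then $a_{11}+a_{22}\in\mathcal{Z}(\mathfrak{R})$. Then $\mathcal{D}$ is almost additive, i.e. $\mathcal{D}(a+b)-\mathcal{D}(a)-\mathcal{D}(b)\in\mathcal{Z}(\mathfrak{R})$ for all $a,b\in\mathfrak{R}$.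
   Context: Rings are not assumed associative or unital. The associator is $(x,y,z)=(xy)z-x(yz)$; $\mathfrak{R}$ is alternative if $(x,x,y)=0=(y,x,x)$ for all $x,y$. $[x,y]=xy-yx$ and $\mathcal{Z}(\mathfrak{R})=\{r\in\mathfrak{R}: [r,x]=0 \text{ for all } x\in\mathfrak{R}\}$ is the commutative center. Define $p_1(x)=x$ and $p_n(x_1,\dots,x_n)=[p_{n-1}(x_1,\dots,x_{n-1}),x_n]$ for $n\ge 2$. For an integer $n\ge2$, a map $\mathcal{D}\colon\mathfrak{R}\to\mathfrak{R}$ (not necessarily additive) is a multiplicative Lie $n$-derivation if $\mathcal{D}(p_n(x_1,\dots,x_n))=\sum_{i=1}^n p_n(x_1,\dots,x_{i-1},\mathcal{D}(x_i),x_{i+1},\dots,x_n)$ for all $x_1,\dots,x_n\in\mathfrak{R}$; a multiplicative Lie-type derivation is a multiplicative Lie $n$-derivation for some $n\ge 2$. A nontrivial idempotent is an element $e_1\neq0$ with $e_1^2=e_1$ which is not a multiplicative identity of $\mathfrak{R}$. Writing $e_2a:=a-e_1a$ and $ae_2:=a-ae_1$, one has $(e_ia)e_j=e_i(ae_j)$, and $\mathfrak{R}_{ij}=e_i\mathfrak{R}e_j$ ($i,j=1,2$) gives the Peirce decomposition $\mathfrak{R}=\mathfrak{R}_{11}\oplus\mathfrak{R}_{12}\oplus\mathfrak{R}_{21}\oplus\mathfrak{R}_{22}$. *)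

(* Defs.v *)
From HB Require Import structures.
From mathcomp Require Import all_boot all_algebra.
Set Implicit Arguments. Unset Strict Implicit. Unset Printing Implicit Defensive.
Import GRing.Theory.
Local Open Scope ring_scope.

(* A (not necessarily associative, not necessarily unital) ring is an
   additive abelian group R : zmodType with a biadditive multiplication mul. *)
Section NonAssoc.
Variables (R : zmodType) (mul : R -> R -> R).

Definition biadditive : Prop :=
  (forall x y z, mul (x + y) z = mul x z + mul y z) /\
  (forall x y z, mul x (y + z) = mul x y + mul x z).

Definition assoc (x y z : R) : R := mul (mul x y) z - mul x (mul y z).

Definition alternative : Prop :=
  forall x y, assoc x x y = 0 /\ assoc y x x = 0.

Definition lie (x y : R) : R := mul x y - mul y x.

Definition in_center (r : R) : Prop := forall x, lie r x = 0.

Fixpoint pcomm (x : nat -> R) (k : nat) : R :=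
  if k is k'.+1 then lie (pcomm x k') (x k) else x 0%N.

(* p_n(x_1,...,x_n) with x_i = x (i-1) *)
Definition p_n (n : nat) (x : nat -> R) : R := pcomm x n.-1.

Definition upd (x : nat -> R) (i : nat) (v : R) : nat -> R :=
  fun j => if j == i then v else x j.

Definition lie_n_derivation (n : nat) (D : R -> R) : Prop :=
  forall x : nat -> R,
    D (p_n n x) = \sum_(i < n) p_n n (upd x i (D (x i))).

Definition lie_type_derivation (D : R -> R) : Prop :=
  exists n, (2 <= n)%N /\ lie_n_derivation n D.

Definition is_idempotent (e : R) : Prop := mul e e = e.

Definition is_mul_identity (e : R) : Prop := forall x, mul e x = x /\ mul x e = x.

Definition nontrivial_idempotent (e : R) : Prop :=
  e != 0 /\ is_idempotent e /\ ~ is_mul_identity e.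

(* Peirce operations relative to e1: e_1 a := e1 a, e_2 a := a - e1 a,
   a e_1 := a e1, a e_2 := a - a e1. *)
Definition peL (e1 : R) (i : bool) (a : R) : R := if i then mul e1 a else a - mul e1 a.
Definition peR (e1 : R) (j : bool) (a : R) : R := if j then mul a e1 else a - mul a e1.

(* Peirce component R_ij = e_i R e_j  (i, j = true for 1, false for 2) *)
Definition peirce (e1 : R) (i j : bool) (x : R) : Prop :=
  exists a, x = peR e1 j (peL e1 i a).

Definition almost_additive (D : R -> R) : Prop :=
  forall a b, in_center (D (a + b) - D a - D b).
End NonAssoc.

(* Main.v *)
Require Import Defs.
From mathcomp Require Import all_boot all_algebra.
Set Implicit Arguments. Unset Strict Implicit. Unset Printing Implicit Defensive.
Import GRing.Theory.
Local Open Scope ring_scope.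

Section Basic.
Variables (R : zmodType) (mul : R -> R -> R).
Hypothesis hbi : biadditive mul.
Hypothesis halt : alternative mul.

Lemma mulDl x y z : mul (x + y) z = mul x z + mul y z. Proof. exact: hbi.1. Qed.
Lemma mulDr x y z : mul x (y + z) = mul x y + mul x z. Proof. exact: hbi.2. Qed.

Lemma self0 (a : R) : a = a + a -> a = 0.
Proof. move/(congr1 (fun z => z - a)); rewrite subrr addrK => <-. by []. Qed.

Lemma mul0l y : mul 0 y = 0.
Proof. apply: self0; by rewrite -mulDl addr0. Qed.
Lemma mul0r y : mul y 0 = 0.
Proof. apply: self0; by rewrite -mulDr addr0. Qed.
Lemma mulNl x y : mul (- x) y = - mul x y.
Proof. apply/eqP; by rewrite -subr_eq0 opprK -mulDl addNr mul0l. Qed.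
Lemma mulNr x y : mul y (- x) = - mul y x.
Proof. apply/eqP; by rewrite -subr_eq0 opprK -mulDr addNr mul0r. Qed.
Lemma mulBl x y z : mul (x - y) z = mul x z - mul y z.
Proof. by rewrite mulDl mulNl. Qed.
Lemma mulBr x y z : mul x (y - z) = mul x y - mul x z.
Proof. by rewrite mulDr mulNr. Qed.

Local Notation lie := (lie mul).
Local Notation assoc := (assoc mul).

Lemma lieDl x y z : lie (x + y) z = lie x z + lie y z.
Proof. by rewrite /Defs.lie mulDl mulDr opprD addrACA. Qed.
Lemma lieDr x y z : lie x (y + z) = lie x y + lie x z.
Proof. by rewrite /Defs.lie mulDl mulDr opprD addrACA. Qed.
Lemma lie0l y : lie 0 y = 0.
Proof. by rewrite /Defs.lie mul0l mul0r subrr. Qed.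
Lemma lie0r y : lie y 0 = 0.
Proof. by rewrite /Defs.lie mul0l mul0r subrr. Qed.
Lemma lieNl x y : lie (- x) y = - lie x y.
Proof. by rewrite /Defs.lie mulNl mulNr opprB opprK addrC. Qed.
Lemma lieNr x y : lie y (- x) = - lie y x.
Proof. by rewrite /Defs.lie mulNl mulNr opprB opprK addrC. Qed.
Lemma lieC x y : lie x y = - lie y x.
Proof. by rewrite /Defs.lie opprB. Qed.
Lemma liexx x : lie x x = 0.
Proof. by rewrite /Defs.lie subrr. Qed.

Lemma assocDl x y z w : assoc (x + y) z w = assoc x z w + assoc y z w.
Proof. by rewrite /Defs.assoc !mulDl opprD addrACA. Qed.
Lemma assocDm x y z w : assoc z (x + y) w = assoc z x w + assoc z y w.
Proof. by rewrite /Defs.assoc !(mulDl, mulDr) opprD addrACA. Qed.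
Lemma assocDr x y z w : assoc z w (x + y) = assoc z w x + assoc z w y.
Proof. by rewrite /Defs.assoc !mulDr opprD addrACA. Qed.

Lemma swap12 x y z : assoc x y z = - assoc y x z.
Proof.
have := (halt (x + y) z).1.
rewrite assocDl !assocDm (halt x z).1 (halt y z).1 add0r addr0.
by move/eqP; rewrite addr_eq0 => /eqP.
Qed.
Lemma swap23 x y z : assoc x y z = - assoc x z y.
Proof.
have := (halt (y + z) x).2.
rewrite assocDr !assocDm (halt y x).2 (halt z x).2 add0r addr0.
by move/eqP; rewrite addr_eq0 => /eqP ->; rewrite opprK.
Qed.
Lemma cyc x y z : assoc x y z = assoc y z x.
Proof. by rewrite swap12 swap23 opprK. Qed.
Lemma flex x y : assoc x y x = 0.
Proof. by rewrite swap23 (halt x y).1 oppr0. Qed.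


Variable e : R.
Hypothesis he : mul e e = e.

Definition R11 c := mul e c = c /\ mul c e = c.
Definition R22 c := mul e c = 0 /\ mul c e = 0.
Definition R12 c := mul e c = c /\ mul c e = 0.
Definition R21 c := mul e c = 0 /\ mul c e = c.
Definition Dl t := lie t e = 0.
Definition O u := exists u1 u2, R12 u1 /\ R21 u2 /\ u = u1 + u2.
Definition rho y := lie y e.

Lemma eq_sub0 (a b : R) : a - b = 0 -> a = b.
Proof. exact: subr0_eq. Qed.
Lemma sub_same (a b : R) : a - b = a -> b = 0.
Proof. by move/eqP; rewrite -subr_eq0 addrAC subrr add0r oppr_eq0 => /eqP. Qed.
Lemma sub_same2 (a b : R) : a - b = - b -> a = 0.
Proof. by move/eqP; rewrite -subr_eq0 opprK subrK => /eqP. Qed.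

Lemma R12D x y : R12 x -> R12 y -> R12 (x + y).
Proof. by case=> h1 h2 [h3 h4]; rewrite /R12 mulDl mulDr h1 h2 h3 h4 addr0. Qed.
Lemma R12N x : R12 x -> R12 (- x).
Proof. by case=> h1 h2; rewrite /R12 mulNl mulNr h1 h2 oppr0. Qed.
Lemma R12B x y : R12 x -> R12 y -> R12 (x - y).
Proof. by move=> h1 h2; apply: R12D => //; apply: R12N. Qed.
Lemma R21D x y : R21 x -> R21 y -> R21 (x + y).
Proof. by case=> h1 h2 [h3 h4]; rewrite /R21 mulDl mulDr h1 h2 h3 h4 addr0. Qed.
Lemma R21N x : R21 x -> R21 (- x).
Proof. by case=> h1 h2; rewrite /R21 mulNl mulNr h1 h2 oppr0. Qed.
Lemma R21B x y : R21 x -> R21 y -> R21 (x - y).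
Proof. by move=> h1 h2; apply: R21D => //; apply: R21N. Qed.
Lemma R12_0 : R12 0. Proof. by rewrite /R12 mul0l mul0r. Qed.
Lemma R21_0 : R21 0. Proof. by rewrite /R21 mul0l mul0r. Qed.
Lemma DlD x y : Dl x -> Dl y -> Dl (x + y).
Proof. by rewrite /Dl lieDl => -> ->; rewrite addr0. Qed.
Lemma DlN x : Dl x -> Dl (- x).
Proof. by rewrite /Dl lieNl => ->; rewrite oppr0. Qed.
Lemma DlB x y : Dl x -> Dl y -> Dl (x - y).
Proof. by move=> h1 h2; apply: DlD => //; apply: DlN. Qed.
Lemma Dl0 : Dl 0. Proof. by rewrite /Dl lie0l. Qed.
Lemma Dle : Dl e. Proof. by rewrite /Dl liexx. Qed.

Lemma b1 x c : R12 x -> R21 c -> Dl (lie x c).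
Proof.
case=> ex xe [ec ce].
have A: assoc x e c = 0 by rewrite /Defs.assoc xe ec mul0l mul0r subrr.
have h1: mul (mul x c) e = mul x c.
  by have := swap23 x c e; rewrite A oppr0 /Defs.assoc ce; apply: eq_sub0.
have h2: mul e (mul x c) = mul x c.
  by have := swap12 e x c; rewrite A oppr0 /Defs.assoc ex => /eq_sub0.
have B: assoc c e x = 0 by rewrite /Defs.assoc ce ex subrr.
have h3: mul (mul c x) e = 0.
  by have := swap23 c x e; rewrite B oppr0 /Defs.assoc xe mul0r subr0.
have h4: mul e (mul c x) = 0.
  have := swap12 e c x; rewrite B oppr0 /Defs.assoc ec mul0l sub0r.
  by move/eqP; rewrite oppr_eq0 => /eqP.
by rewrite /Dl /Defs.lie mulBl mulBr h1 h2 h3 h4 subrr.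
Qed.

Lemma m1212 x y : R12 x -> R12 y -> R21 (mul x y).
Proof.
case=> ex xe [ey ye].
have A: assoc x e y = - mul x y by rewrite /Defs.assoc xe ey mul0l sub0r.
split.
  by have := swap12 e x y; rewrite A opprK /Defs.assoc ex => /sub_same.
by have := swap23 x y e; rewrite A opprK /Defs.assoc ye mul0r subr0.
Qed.
Lemma m2121 x y : R21 x -> R21 y -> R12 (mul x y).
Proof.
case=> ex xe [ey ye].
have A: assoc x e y = mul x y by rewrite /Defs.assoc xe ey mul0r subr0.
split.
  by have := swap12 e x y; rewrite A /Defs.assoc ex mul0l sub0r => /oppr_inj.
by have := swap23 x y e; rewrite A /Defs.assoc ye => /sub_same2.
Qed.
Lemma c1 x y : R12 x -> R12 y -> R21 (lie x y).
Proof. by move=> hx hy; apply: R21B; apply: m1212. Qed.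
Lemma c2 x y : R21 x -> R21 y -> R12 (lie x y).
Proof. by move=> hx hy; apply: R12B; apply: m2121. Qed.

Lemma m11_12 a c : R11 a -> R12 c -> R12 (mul a c) /\ mul c a = 0.
Proof.
case=> ea ae [ec ce].
have A: assoc a e c = 0 by rewrite /Defs.assoc ae ec subrr.
split; first split.
- by have := swap12 e a c; rewrite A oppr0 /Defs.assoc ea => /eq_sub0.
- by have := swap23 a c e; rewrite A oppr0 /Defs.assoc ce mul0r subr0.
- have := cyc c e a; rewrite (swap12 e a c) A oppr0 /Defs.assoc ce ea mul0l sub0r.
  by move/eqP; rewrite oppr_eq0 => /eqP.
Qed.
Lemma m22_12 b c : R22 b -> R12 c -> mul b c = 0 /\ R12 (mul c b).
Proof.
case=> eb be [ec ce].
have B: assoc c e b = 0 by rewrite /Defs.assoc ce eb mul0l mul0r subrr.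
split; last split.
- have := cyc b e c; rewrite (swap12 e c b) B oppr0 /Defs.assoc be ec mul0l sub0r.
  by move/eqP; rewrite oppr_eq0 => /eqP.
- by have := swap12 e c b; rewrite B oppr0 /Defs.assoc ec => /eq_sub0.
- by have := swap23 c b e; rewrite B oppr0 /Defs.assoc be mul0r subr0.
Qed.
Lemma m11_21 a c : R11 a -> R21 c -> mul a c = 0 /\ R21 (mul c a).
Proof.
case=> ea ae [ec ce].
have A: assoc c e a = 0 by rewrite /Defs.assoc ce ea subrr.
split; last split.
- by have := cyc a e c; rewrite (swap12 e c a) A oppr0 /Defs.assoc ae ec mul0r subr0.
- have := swap12 e c a; rewrite A oppr0 /Defs.assoc ec mul0l sub0r.
  by move/eqP; rewrite oppr_eq0 => /eqP.
- by have := swap23 c a e; rewrite A oppr0 /Defs.assoc ae; apply: eq_sub0.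
Qed.
Lemma m22_21 b c : R22 b -> R21 c -> mul c b = 0 /\ R21 (mul b c).
Proof.
case=> eb be [ec ce].
have A: assoc b e c = 0 by rewrite /Defs.assoc be ec mul0l mul0r subrr.
split; last split.
- have := swap23 c e b; rewrite (cyc c b e) A.
  by rewrite oppr0 /Defs.assoc ce eb mul0r subr0.
- have := swap12 e b c; rewrite A oppr0 /Defs.assoc eb mul0l sub0r.
  by move/eqP; rewrite oppr_eq0 => /eqP.
- by have := swap23 b c e; rewrite A oppr0 /Defs.assoc ce; apply: eq_sub0.
Qed.

Lemma Dl_dec t : Dl t -> exists t1 t2, R11 t1 /\ R22 t2 /\ t = t1 + t2.
Proof.
rewrite /Dl /Defs.lie => /eq_sub0 te.
have h1 : mul e (mul e t) = mul e t.
  by have := (halt e t).1; rewrite /Defs.assoc he => /eq_sub0.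
have h2 : mul (mul e t) e = mul e t.
  by have := (halt e t).2; rewrite /Defs.assoc he -te => /eq_sub0.
exists (mul e t), (t - mul e t); split; [by [] | split; last by rewrite addrC subrK].
by rewrite /R22 mulBl mulBr h1 h2 te !subrr.
Qed.

Lemma dl12 t c : Dl t -> R12 c -> R12 (lie t c).
Proof.
move=> /Dl_dec [t1 [t2 [h1 [h2 ->]]]] hc.
have [k1 k2] := m11_12 h1 hc. have [k3 k4] := m22_12 h2 hc.
by rewrite lieDl /Defs.lie k2 k3 subr0 sub0r; apply: R12D => //; apply: R12N.
Qed.
Lemma dl21 t c : Dl t -> R21 c -> R21 (lie t c).
Proof.
move=> /Dl_dec [t1 [t2 [h1 [h2 ->]]]] hc.
have [k1 k2] := m11_21 h1 hc. have [k3 k4] := m22_21 h2 hc.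
by rewrite lieDl /Defs.lie k1 k3 sub0r subr0; apply: R21D => //; apply: R21N.
Qed.

Lemma rho12 y : R12 y -> rho y = - y.
Proof. by case=> h1 h2; rewrite /rho /Defs.lie h1 h2 sub0r. Qed.
Lemma rho21 y : R21 y -> rho y = y.
Proof. by case=> h1 h2; rewrite /rho /Defs.lie h1 h2 subr0. Qed.

Lemma pe12 a : R12 (mul e a - mul (mul e a) e).
Proof.
have h1 : mul e (mul e a) = mul e a.
  by have := (halt e a).1; rewrite /Defs.assoc he => /eq_sub0.
have h2 : mul e (mul (mul e a) e) = mul (mul e a) e.
  by have := flex e (mul e a); rewrite /Defs.assoc h1 => /eq_sub0 <-.
have h3 : mul (mul (mul e a) e) e = mul (mul e a) e.
  by have := (halt e (mul e a)).2; rewrite /Defs.assoc he => /eq_sub0.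
by rewrite /R12 mulBr mulBl h1 h2 h3 subrr.
Qed.
Lemma pe21 a : R21 (mul a e - mul (mul e a) e).
Proof.
have h1 : mul e (mul a e) = mul (mul e a) e.
  by have := flex e a; rewrite /Defs.assoc => /eq_sub0.
have h2 : mul e (mul (mul e a) e) = mul (mul e a) e.
  have h0 : mul e (mul e a) = mul e a.
    by have := (halt e a).1; rewrite /Defs.assoc he => /eq_sub0.
  by have := flex e (mul e a); rewrite /Defs.assoc h0 => /eq_sub0 <-.
have h3 : mul (mul (mul e a) e) e = mul (mul e a) e.
  by have := (halt e (mul e a)).2; rewrite /Defs.assoc he => /eq_sub0.
have h4 : mul (mul a e) e = mul a e.
  by have := (halt e a).2; rewrite /Defs.assoc he => /eq_sub0.
by rewrite /R21 mulBr mulBl h1 h2 h3 h4 subrr.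
Qed.

Lemma rhoO a : O (rho a).
Proof.
exists (- (mul e a - mul (mul e a) e)), (mul a e - mul (mul e a) e).
split; first exact/R12N/pe12. split; first exact: pe21.
by rewrite /rho /Defs.lie opprB [RHS]addrC subrKA.
Qed.

Lemma ODl u : O u -> Dl u -> u = 0.
Proof.
case=> [u1 [u2 [h1 [h2 ->]]]].
rewrite /Dl -/(rho _) /rho lieDl -/(rho u1) -/(rho u2) rho12 // rho21 //.
rewrite addrC => /eq_sub0 E.
have : mul e u2 = mul e u1 by rewrite E.
by rewrite h1.1 h2.1 => E2; rewrite E -E2 addr0.
Qed.

Lemma rhoD x y : rho (x + y) = rho x + rho y. Proof. exact: lieDl. Qed.
Lemma rhoN x : rho (- x) = - rho x. Proof. exact: lieNl. Qed.
Lemma iterD k x y : iter k rho (x + y) = iter k rho x + iter k rho y.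
Proof. by elim: k => //= k ->; rewrite rhoD. Qed.
Lemma iterN k x : iter k rho (- x) = - iter k rho x.
Proof. by elim: k => //= k ->; rewrite rhoN. Qed.
Lemma iter0 k : iter k rho 0 = 0.
Proof. by elim: k => //= k ->; rewrite /rho lie0l. Qed.
Lemma iterDl k y : Dl y -> Dl (iter k rho y).
Proof.
case: k => // k hy; have r0 : rho y = 0 := hy.
by rewrite iterSr r0 iter0; exact: Dl0.
Qed.
Lemma iter12 k y : R12 y -> R12 (iter k rho y).
Proof. by move=> hy; elim: k => //= k IH; rewrite rho12 //; exact: R12N. Qed.
Lemma iter21 k y : R21 y -> iter k rho y = y.
Proof. by move=> hy; elim: k => //= k ->; exact: rho21. Qed.
Lemma iterO k y : O y -> O (iter k rho y).
Proof. by case: k => // k _; exact: rhoO. Qed.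
Lemma injO k w : O w -> Dl (iter k rho w) -> w = 0.
Proof.
elim: k w => [|k IH] w hw h; first exact: ODl.
rewrite iterSr in h; have h' := IH _ (rhoO w) h.
exact: ODl.
Qed.
Lemma surj12 k v : R12 v -> exists x, R12 x /\ iter k rho x = v.
Proof.
elim: k v => [|k IH] v hv; first by exists v.
have [x [hx <-]] := IH v hv.
exists (- x); split; first exact: R12N.
by rewrite iterSr rhoN rho12 // opprK.
Qed.

Lemma pcomm_ext x y k : (forall i, x i = y i) -> pcomm mul x k = pcomm mul y k.
Proof. by move=> h; elim: k => [|k IH] /=; rewrite ?IH h. Qed.

Lemma pcomm_far x j v k : (k < j)%N -> pcomm mul (upd x j v) k = pcomm mul x k.
Proof.
elim: k => [|k IH] hk /=.
  by rewrite /upd; case: j hk.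
rewrite IH; last exact: ltnW.
by rewrite /upd eq_sym (gtn_eqF hk).
Qed.

Lemma pcomm_add x j u v k : (j <= k)%N ->
  pcomm mul (upd x j (u + v)) k = pcomm mul (upd x j u) k + pcomm mul (upd x j v) k.
Proof.
elim: k => [|k IH] hk /=.
  by move: hk; rewrite leqn0 => /eqP ->; rewrite /upd.
case: (eqVneq j k.+1) => [->|hne].
  rewrite !pcomm_far // /upd eqxx; exact: lieDr.
have hjk : (j <= k)%N by rewrite -ltnS ltn_neqAle hne hk.
rewrite IH // lieDl /upd.
by rewrite eq_sym (negPf hne).
Qed.

Lemma pcomm_zero x j k : (j <= k)%N -> x j = 0 -> pcomm mul x k = 0.
Proof.
elim: k => [|k IH] hk hx /=.
  by move: hk; rewrite leqn0 => /eqP <-.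
case: (eqVneq j k.+1) => [<-|hne]; first by rewrite hx lie0r.
have hjk : (j <= k)%N by rewrite -ltnS ltn_neqAle hne hk.
by rewrite IH // lie0l.
Qed.

Definition tup a c : nat -> R := fun j => match j with 0 => a | 1 => c | _ => e end.

Lemma pcomm_tup a c k : pcomm mul (tup a c) k.+1 = iter k rho (lie a c).
Proof. by elim: k => //= k IH; rewrite IH. Qed.

Lemma upd_tup0 a c w i : upd (tup a c) 0 w i = tup w c i.
Proof. by rewrite /upd; case: i. Qed.
Lemma upd_tup1 a c w i : upd (tup a c) 1 w i = tup a w i.
Proof. by rewrite /upd; case: i => [|[|i]]. Qed.

Variable m : nat.
Variable D : R -> R.
Hypothesis hD : forall x : nat -> R,
  D (pcomm mul x m.+1) = \sum_(i < m.+2) pcomm mul (upd x i (D (x i))) m.+1.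

Definition S a b := D (a + b) - D a - D b.

Lemma arith3 (A B C : R) : A + B + C - A - B = C.
Proof. by rewrite -addrA -opprD addrAC subrr add0r. Qed.

Lemma D_split a b : D (a + b) = D a + D b + S a b.
Proof. by rewrite /S [RHS]addrC -[D (a + b) - D a - D b]addrA -opprD subrK. Qed.

Lemma D0 : D 0 = 0.
Proof.
have := hD (fun _ => 0).
rewrite (pcomm_zero (j := 0)) // big1 // => i _.
case: i => [[|i] hi].
  by apply: (pcomm_zero (j := 1)).
by apply: (pcomm_zero (j := 0)).
Qed.

Lemma Sid x j a b : (j < m.+2)%N ->
  S (pcomm mul (upd x j a) m.+1) (pcomm mul (upd x j b) m.+1)
  = pcomm mul (upd x j (S a b)) m.+1.
Proof.
move=> hj.
have hj' : (j <= m.+1)%N by [].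
rewrite /S -pcomm_add // !hD.
set F := fun w (i : 'I_m.+2) =>
  pcomm mul (upd (upd x j w) i (D (upd x j w i))) m.+1.
have key : forall i : 'I_m.+2, F (a + b) i = F a i + F b i +
    (if (i : nat) == j then pcomm mul (upd x j (S a b)) m.+1 else 0).
  move=> i; rewrite /F.
  case: (eqVneq (i : nat) j) => [hij|hij].
    have E : forall w v, pcomm mul (upd (upd x j w) i v) m.+1 = pcomm mul (upd x j v) m.+1.
      by move=> w v; apply: pcomm_ext => l; rewrite /upd hij; case: (l == j).
    have Ei : forall w, upd x j w i = w by move=> w; rewrite /upd hij eqxx.
    by rewrite !E !Ei D_split !pcomm_add.
  have E : forall w v, pcomm mul (upd (upd x j w) i v) m.+1 = pcomm mul (upd (upd x i v) j w) m.+1.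
    move=> w v; apply: pcomm_ext => l; rewrite /upd.
    case: (eqVneq l i) => [->|hli]; first by rewrite (negPf hij).
    by [].
  have Ei : forall w, upd x j w i = x i by move=> w; rewrite /upd (negPf hij).
  by rewrite !E !Ei pcomm_add // addr0.
have sum_if : forall v : R, \sum_(i < m.+2) (if (i : nat) == j then v else 0) = v.
  move=> v; rewrite (bigD1 (Ordinal hj)) //= eqxx big1 ?addr0 // => i hi.
  rewrite ifF //; apply/negbTE; apply: contra hi => /eqP h.
  by apply/eqP; apply: val_inj.
have sumE : \sum_(i < m.+2) F (a + b) i = \sum_(i < m.+2) F a i + \sum_(i < m.+2) F b i
   + pcomm mul (upd x j (S a b)) m.+1.
  by rewrite (eq_bigr _ (fun i _ => key i)) !big_split /= sum_if.
rewrite /F /= in sumE; rewrite sumE.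
exact: arith3.
Qed.

Definition Q a c := iter m rho (lie a c).

Lemma Sid0 a b c : S (Q a c) (Q b c) = Q (S a b) c.
Proof.
have := Sid (tup a c) a b (j := 0) erefl.
rewrite /Q -!pcomm_tup.
have E : forall w, pcomm mul (upd (tup a c) 0 w) m.+1 = pcomm mul (tup w c) m.+1.
  by move=> w; apply: pcomm_ext => i; exact: upd_tup0.
by rewrite !E.
Qed.
Lemma Sid1 a c c' : S (Q a c) (Q a c') = Q a (S c c').
Proof.
have := Sid (tup a c) c c' (j := 1) erefl.
rewrite /Q -!pcomm_tup.
have E : forall w, pcomm mul (upd (tup a c) 1 w) m.+1 = pcomm mul (tup a w) m.+1.
  by move=> w; apply: pcomm_ext => i; exact: upd_tup1.
by rewrite !E.
Qed.

Lemma coc (X Y Z U V W : R) :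
  X - Y - Z = (X - U - V) + (V - W - Z) - (Y - U - W).
Proof.
rewrite -[V - W - Z]addrA subrKA.
rewrite [Y - U - W]addrAC opprB.
rewrite [RHS]addrAC subrKA opprB [W - Y]addrC addrA [X + (- Y + W)]addrA addrK.
by [].
Qed.

Lemma cocycle a b c : S (a + b) c = S a (b + c) + S b c - S a b.
Proof. by rewrite /S [a + (b + c)]addrA; exact: coc. Qed.

Lemma S_sym a b : S a b = S b a.
Proof. by rewrite /S [b + a]addrC addrAC. Qed.

Lemma S0l z : S 0 z = 0.
Proof. by rewrite /S add0r D0 subr0 subrr. Qed.

Lemma coc_use a b c : S a (b + c) = 0 -> S b c = 0 -> Dl (S (a + b) c) -> Dl (S a b).
Proof.
move=> h1 h2; rewrite cocycle h1 h2 addr0 sub0r => /DlN; by rewrite opprK.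
Qed.
Lemma coc_solve a b c : Dl (S (a + b) c) -> Dl (S b c) -> Dl (S a b) -> Dl (S a (b + c)).
Proof.
rewrite cocycle => h1 h2 h3.
have -> : S a (b + c) = S a (b + c) + S b c - S a b + S a b - S b c by rewrite subrK addrK.
by apply: DlB => //; apply: DlD.
Qed.
Lemma coc_solve2 a b c : Dl (S a (b + c)) -> Dl (S b c) -> Dl (S a b) -> Dl (S (a + b) c).
Proof. by rewrite cocycle => h1 h2 h3; apply: DlB => //; apply: DlD. Qed.

Definition C z := in_center mul z.
Lemma C_Dl z : C z -> Dl z. Proof. by move=> h; exact: h. Qed.

Lemma Q_Cl z c : C z -> Q z c = 0.
Proof. by move=> h; rewrite /Q h iter0. Qed.
Lemma Q_Cr a z : C z -> Q a z = 0.
Proof. by move=> h; rewrite /Q lieC h oppr0 iter0. Qed.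
Lemma Q_addr a c c' : Q a (c + c') = Q a c + Q a c'.
Proof. by rewrite /Q lieDr iterD. Qed.
Lemma Q_Dl y c : Dl (lie y c) -> Dl (Q y c).
Proof. exact: iterDl. Qed.

Lemma O12 u : R12 u -> O u.
Proof. by move=> h; exists u, 0; split=> //; split; [exact: R21_0 | rewrite addr0]. Qed.
Lemma O21 u : R21 u -> O u.
Proof. by move=> h; exists 0, u; split; [exact: R12_0 | split=> //; rewrite add0r]. Qed.

Lemma LemA a b : Dl (S (Q a e) (Q b e)) -> Dl (S a b).
Proof. by rewrite Sid0 => h; apply: (injO (k := m)) => //; exact: rhoO. Qed.

Lemma K1 d y : Dl d -> Dl (S d y).
Proof.
move=> hd; apply: LemA.
have -> : Q d e = 0 by rewrite /Q hd iter0.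
rewrite S0l; exact: Dl0.
Qed.
Lemma K1r d y : Dl d -> Dl (S y d).
Proof. by rewrite S_sym; exact: K1. Qed.

Hypothesis hi : forall a11 a22, peirce mul e true true a11 -> peirce mul e false false a22 ->
          (forall x, peirce mul e true false x -> lie (a11 + a22) x = 0) ->
          in_center mul (a11 + a22).
Hypothesis hii : forall a11 a22, peirce mul e true true a11 -> peirce mul e false false a22 ->
          (forall x, peirce mul e false true x -> lie (a11 + a22) x = 0) ->
          in_center mul (a11 + a22).

Lemma dec_sum t : Dl t ->
  peR mul e true (peL mul e true t) + peR mul e false (peL mul e false t) = t.
Proof.
rewrite /Dl /Defs.lie /peR /peL => /eq_sub0 te.
have h2 : mul (mul e t) e = mul e t.
  by have := (halt e t).2; rewrite /Defs.assoc he -te => /eq_sub0.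
by rewrite mulBl h2 te subrr subr0 addrC subrK.
Qed.

Lemma hyp_i t : Dl t -> (forall c, R12 c -> lie t c = 0) -> C t.
Proof.
move=> hd hc.
have := hi (ex_intro _ t erefl) (ex_intro _ t erefl).
rewrite dec_sum //; apply=> x [a ->].
by apply: hc; exact: pe12.
Qed.
Lemma hyp_ii t : Dl t -> (forall c, R21 c -> lie t c = 0) -> C t.
Proof.
move=> hd hc.
have := hii (ex_intro _ t erefl) (ex_intro _ t erefl).
rewrite dec_sum //; apply=> x [a ->].
by apply: hc; rewrite /peR /peL mulBl; exact: pe21.
Qed.

Lemma LemB12 a b : Dl (S a b) -> (forall c, R12 c -> Dl (S (Q a c) (Q b c))) -> C (S a b).
Proof.
move=> hW hc; apply: hyp_i => // c c12.
apply: (injO (k := m)); first exact/O12/dl12.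
by rewrite -/(Q _ _) -Sid0; exact: hc.
Qed.
Lemma LemB21 a b : Dl (S a b) -> (forall c, R21 c -> Dl (S (Q a c) (Q b c))) -> C (S a b).
Proof.
move=> hW hc; apply: hyp_ii => // c c21.
apply: (injO (k := m)); first exact/O21/dl21.
by rewrite -/(Q _ _) -Sid0; exact: hc.
Qed.

Lemma step2a x : R12 x -> C (S e x).
Proof.
move=> hx; apply: LemB21; first exact/K1/Dle.
move=> c hc; apply: K1r; apply: Q_Dl; exact: b1.
Qed.
Lemma step2b y : R21 y -> C (S e y).
Proof.
move=> hy; apply: LemB12; first exact/K1/Dle.
move=> c hc; apply: K1r; apply: Q_Dl; rewrite lieC; apply: DlN; exact: b1.
Qed.

Lemma Qee : Q e e = 0.
Proof. by rewrite /Q liexx iter0. Qed.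

Lemma step3 u v : R21 u -> R12 v -> Dl (S u v).
Proof.
move=> hu hv.
have [x [hx hxv]] := surj12 m.+1 hv.
set y := - u.
have hy : R21 y by exact: R21N.
have T2E : Q e y = u.
  rewrite /Q /Defs.lie hy.1 hy.2 sub0r iter21; first by rewrite /y opprK.
  exact: R21N.
have T3E : Q x e = v by rewrite /Q -/(rho x) -iterSr.
rewrite -T2E -T3E.
apply: (coc_use (c := Q x y)).
- have := Sid0 e x (e + y); rewrite (Q_Cl (z := S e _)); last exact: step2a.
  by rewrite !Q_addr Qee add0r.
- by rewrite Sid1 Q_Cr //; exact: step2b.
- apply: K1r; apply: Q_Dl; exact: b1.
Qed.

Lemma step3' u v : R12 u -> R21 v -> Dl (S u v).
Proof. by move=> hu hv; rewrite S_sym; exact: step3. Qed.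

Lemma step4 u v : R12 u -> R12 v -> Dl (S u v).
Proof.
move=> hu hv.
have [x [hx hxv]] := surj12 m.+1 hv.
have [y [hy hyu]] := surj12 m hu.
have T2E : Q e y = u by rewrite /Q /Defs.lie hy.1 hy.2 subr0.
have T3E : Q x e = v by rewrite /Q -/(rho x) -iterSr.
rewrite -T2E -T3E.
apply: (coc_use (c := Q x y)).
- have := Sid0 e x (e + y); rewrite (Q_Cl (z := S e _)); last exact: step2a.
  by rewrite !Q_addr Qee add0r.
- by rewrite Sid1 Q_Cr //; exact: step2a.
- apply: step3'; first by rewrite T2E T3E; exact: R12D.
  rewrite /Q iter21 //; exact: c1.
Qed.

Lemma step5 u v : R21 u -> R21 v -> Dl (S u v).
Proof.
move=> hu hv.
set y := - u.
have hy : R21 y by exact: R21N.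
have T2E : Q e y = u.
  rewrite /Q /Defs.lie hy.1 hy.2 sub0r iter21; first by rewrite /y opprK.
  exact: R21N.
have T3E : Q v e = v by rewrite /Q -/(rho v) rho21 // iter21.
rewrite -{1}T2E -{1}T3E.
apply: (coc_use (c := Q v y)).
- have := Sid0 e v (e + y); rewrite (Q_Cl (z := S e _)); last exact: step2b.
  by rewrite !Q_addr Qee add0r.
- by rewrite Sid1 Q_Cr //; exact: step2b.
- apply: step3; first by rewrite T2E T3E; exact: R21D.
  apply: iter12; exact: c2.
Qed.

Lemma step6 u v : O u -> O v -> Dl (S u v).
Proof.
case=> [A [B [hA [hB ->]]]] [Cc [E [hC [hE ->]]]].
apply: coc_solve.
- rewrite [A + B + Cc]addrAC; apply: coc_solve2.
  + apply: step3'; [exact: R12D | exact: R21D].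
  + exact: step5.
  + apply: step3' => //; exact: R12D.
- exact: step3'.
- rewrite [A + B]addrC; apply: coc_solve2.
  + apply: step3 => //; exact: R12D.
  + exact: step4.
  + exact: step3.
Qed.

Lemma step7 a b : Dl (S a b).
Proof. by apply: LemA; apply: step6; rewrite /Q -/(rho _); apply: iterO; exact: rhoO. Qed.

Lemma step8 a b : C (S a b).
Proof. by apply: LemB12; [exact: step7 | move=> c _; exact: step7]. Qed.

End Basic.

Unset Implicit Arguments.

Theorem theorem2p1 (R : zmodType) (mul : R -> R -> R)
  (hbi : biadditive mul) (halt : alternative mul)
  (e1 : R) (he1 : nontrivial_idempotent mul e1)
  (D : R -> R) (hD : lie_type_derivation mul D)
  (hi : forall a11 a22, peirce mul e1 true true a11 -> peirce mul e1 false false a22 ->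
          (forall x, peirce mul e1 true false x -> lie mul (a11 + a22) x = 0) ->
          in_center mul (a11 + a22))
  (hii : forall a11 a22, peirce mul e1 true true a11 -> peirce mul e1 false false a22 ->
          (forall x, peirce mul e1 false true x -> lie mul (a11 + a22) x = 0) ->
          in_center mul (a11 + a22)) :
  almost_additive mul D.
Proof.
case: hD => n [hn hder].
case: n hn hder => [|[|m]] // _ hder.
move=> a b.
exact: (@step8 R mul hbi halt e1 he1.2.1 m D hder hi hii a b).
Qed.
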